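(* For every integer $n \ge 9$ of the form $n = 5k + 4$ with $k$ a positive integer, we have $\mathbf{max\mbox{-}diam}(n, 2) \ge 4^{(n - 4)/5}$.
   Context: A partial DFA is a triple $\mathcal{A} = (Q, \Sigma, \delta)$ with $Q$ a finite set of states, $\Sigma$ a finite alphabet, and $\delta \colon Q \times \Sigma \rightharpoonup Q$ a partial transition function, extended to words in the usual way. Each word $w \in \Sigma^*$ expresses the partial transformation $q \mapsto \delta(q, w)$ of $Q$ (undefined where $\delta(q,w)$ is undefined). The depth of a partial transformation $f$ expressed by some word is the length of a shortest word expressing $f$. The diameter of $\mathcal{A}$ is the maximum depth over all partial transformations of $Q$ expressed by some word in $\mathcal{A}$ (equivalently, the smallest $\ell \ge 0$ such that every transformation expressed by a word is expressed by a word of length at most $\ell$). $\mathbf{max\mbox{-}diam}(n, m)$ denotes the maximum diameter over all partial DFAs with $n$ states and $m$ letters. *)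

(* Defs.v *)
From mathcomp Require Import all_boot.
From mathcomp Require Import boolp.

Set Implicit Arguments.
Unset Strict Implicit.
Unset Printing Implicit Defensive.

Definition pdfa (n m : nat) := {ffun 'I_n * 'I_m -> option 'I_n}.

Definition ptrans (n : nat) := {ffun 'I_n -> option 'I_n}.

Definition delta_word n m (A : pdfa n m) (q : 'I_n) (w : seq 'I_m) : option 'I_n :=
  foldl (fun oq a => if oq is Some p then A (p, a) else None) (Some q) w.

Definition expr n m (A : pdfa n m) (w : seq 'I_m) : ptrans n :=
  [ffun q => delta_word A q w].

Definition expressed_len n m (A : pdfa n m) (f : ptrans n) (l : nat) : bool :=
  [exists t : l.-tuple 'I_m, expr A t == f].

Definition expressed n m (A : pdfa n m) (f : ptrans n) : Prop :=
  exists w : seq 'I_m, expr A w = f.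

(* Depth: length of a shortest word expressing f (0 if f is not expressed). *)
Definition depth n m (A : pdfa n m) (f : ptrans n) : nat :=
  match pselect (exists l, expressed_len A f l) with
  | left h => ex_minn h
  | right _ => 0
  end.

Definition diameter n m (A : pdfa n m) : nat :=
  \max_(f : ptrans n | `[< expressed A f >]) depth A f.

Definition max_diam (n m : nat) : nat := \max_(A : pdfa n m) diameter A.

(* Main.v *)
Require Import Defs.
From mathcomp Require Import all_boot.
From mathcomp Require Import boolp.
From mathcomp Require Import zify.


Set Implicit Arguments.
Unset Strict Implicit.
Unset Printing Implicit Defensive.

Definition stepN (k p x : nat) : option nat :=
  if x == 0 then
    (if p < 4 * k.+1 then Some (if p + 4 < 4 * k.+1 then p + 4 else p + 4 - 4 * k.+1)
     else if p == 4 * k.+1 then Some (4 * k.+1).+1 else None)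
  else
    (if p < 4 then None else if p < 4 * k then Some p
     else if p < 4 * k + 3 then Some p.+1
     else if p == 4 * k + 3 then Some (4 * k.+1)
     else if p == (4 * k.+1).+1 then Some 0 else None).

Definition stepn (n k p x : nat) : option nat :=
  match stepN k p x with Some r => if r < n then Some r else None | None => None end.

Definition dwn (n k p : nat) (w : seq 'I_2) : option nat :=
  foldl (fun o (x : 'I_2) => if o is Some q then stepn n k q x else None) (Some p) w.

Definition lvl k p := if p < 4 * k.+1 then p %/ 4 else if p == 4 * k.+1 then k else 0.
Definition vl k p := if p < 4 * k.+1 then p %% 4 else 4.

Lemma foldl_None n k w :
  foldl (fun o (x : 'I_2) => if o is Some q then stepn n k q x else None) None w = None.
Proof. by elim: w. Qed.

Lemma dwn_cat n k p u v :
  dwn n k p (u ++ v) = if dwn n k p u is Some q then dwn n k q v else None.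
Proof.
rewrite /dwn foldl_cat; case: (foldl _ _ u) => [q|] //; exact: foldl_None.
Qed.

Lemma dwn_cons n k p x w :
  dwn n k p (x :: w) = if stepn n k p x is Some q then dwn n k q w else None.
Proof. by rewrite -cat1s dwn_cat. Qed.

Lemma dwn_rcons n k p x w :
  dwn n k p (rcons w x) = if dwn n k p w is Some q then stepn n k q x else None.
Proof. by rewrite -cats1 dwn_cat. Qed.

Lemma stepA_inv k p p' : 0 < k -> p < 4 * k + 6 -> stepN k p 0 = Some p' ->
  p' < 4 * k + 6 /\ lvl k p' = (if lvl k p == k then 0 else (lvl k p).+1) /\ vl k p' = vl k p.
Proof.
move=> k0 hp; rewrite /stepN /lvl /vl /=.
repeat (case: ifP => [?|/negbT ?]); move=> // H; case: H => H; subst p';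
 repeat (case: ifP => [?|/negbT ?]); try lia.
Qed.

Lemma stepB_inv k p p' : 0 < k -> p < 4 * k + 6 -> stepN k p 1 = Some p' ->
  [/\ p' < 4 * k + 6, lvl k p' = lvl k p,
      (lvl k p = 0 -> vl k p = 4 /\ vl k p' = 0),
      (lvl k p = k -> vl k p <= 3 /\ vl k p' = (vl k p).+1) &
      (lvl k p <> 0 -> lvl k p <> k -> vl k p' = vl k p)].
Proof.
move=> k0 hp; rewrite /stepN /lvl /vl /=.
repeat (case: ifP => [?|/negbT ?]); move=> // H; case: H => H; subst p';
  repeat (case: ifP => [?|/negbT ?]); split; lia.
Qed.

Set Implicit Arguments.
Unset Strict Implicit.
Unset Printing Implicit Defensive.

Ltac bcase :=
  match goal with |- context [if ?c then _ else _] =>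
    lazymatch c with context [if _ then _ else _] => fail | _ =>
      let E := fresh "E" in case E: c; [ | move/negbT: E => E] end end.

Definition tok k t := 4 * (k - t).
Definition lvlf k r t := if t < r then r - t - 1 else r + k - t.
Definition vo k (o : option nat) := if o is Some p then vl k p else 0.
Definition Pot n k w := \sum_(t < k) vo k (dwn n k (tok k t) w) * 4 ^ t.
Definition cntb (w : seq 'I_2) := count (fun x : 'I_2 => (x : nat) != 0) w.

Lemma ind_sum (k r : nat) :
  \sum_(t < k) ((t : nat) == r) * 4 ^ t <= (r == 0) + \sum_(t < k) ((t : nat).+1 == r) * 4 ^ t.+1.
Proof.
apply: (@leq_trans (\sum_(t < k.+1) ((t : nat) == r) * 4 ^ t)).
  by rewrite big_ord_recr /= leq_addr.
by rewrite big_ord_recl /= expn0 muln1 eq_sym.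
Qed.

Lemma lvlf_a k r t : r <= k -> t < k ->
  lvlf k (if r == k then 0 else r.+1) t = (if lvlf k r t == k then 0 else (lvlf k r t).+1).
Proof.
move=> hr ht; rewrite /lvlf; repeat bcase; lia.
Qed.

Lemma lvlf_0 k r t : r <= k -> t < k -> (lvlf k r t == 0) = (t.+1 == r).
Proof. move=> hr ht; rewrite /lvlf; case: ifP => ?; apply/eqP/eqP; lia. Qed.

Lemma lvlf_k k r t : r <= k -> t < k -> (lvlf k r t == k) = (t == r).
Proof. move=> hr ht; rewrite /lvlf; case: ifP => ?; apply/eqP/eqP; lia. Qed.

Lemma alive_rcons n k p w x : dwn n k p (rcons w x) <> None -> dwn n k p w <> None.
Proof. by rewrite dwn_rcons; case: (dwn n k p w). Qed.

Lemma inv_main n k w : 0 < k -> (forall t, t < k -> dwn n k (tok k t) w <> None) ->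
  exists2 r, r <= k &
   (forall t, t < k -> exists p, [/\ dwn n k (tok k t) w = Some p, p < 4 * k + 6 & lvl k p = lvlf k r t])
   /\ Pot n k w <= cntb w.
Proof.
move=> k0; elim/last_ind: w => [|w x IH] Hal.
  exists 0 => //; split.
    move=> t ht; exists (tok k t); split => //; rewrite /tok /lvlf /lvl; repeat bcase; lia.
  rewrite /Pot big1 // => t _; rewrite /vo /= /vl /tok.
  apply/eqP; rewrite muln_eq0; apply/orP; left; apply/eqP; repeat bcase; lia.
have [r hr [Hp HP]] := IH (fun t ht => alive_rcons (Hal t ht)).
have Hstep : forall t, t < k -> exists p p', [/\ dwn n k (tok k t) w = Some p, p < 4 * k + 6,
    lvl k p = lvlf k r t, stepN k p x = Some p' & dwn n k (tok k t) (rcons w x) = Some p'].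
  move=> t ht; have [p [E1 E2 E3]] := Hp t ht; have := Hal t ht.
  rewrite dwn_rcons E1 /stepn; case E: stepN => [p'|] //; case: ifP => // _ _.
  by exists p, p'.
case: (boolP ((x : nat) == 0)) => [/eqP x0|xn0].
- exists (if r == k then 0 else r.+1); first by case: ifP => // /negbT ?; lia.
  split.
    move=> t ht; have [p [p' [E1 E2 E3 E4 E5]]] := Hstep t ht; exists p'.
    rewrite x0 in E4; have [F1 [F2 F3]] := stepA_inv k0 E2 E4.
    by split => //; rewrite F2 E3 lvlf_a.
  have -> : cntb (rcons w x) = cntb w + ((x : nat) != 0) by rewrite /cntb -cats1 count_cat /= addn0.
  rewrite x0 addn0.
  apply: (leq_trans _ HP); rewrite /Pot; apply: eq_leq; apply: eq_bigr => t _.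
  have [p [p' [E1 E2 E3 E4 E5]]] := Hstep t (ltn_ord t).
  rewrite x0 in E4; have [F1 [F2 F3]] := stepA_inv k0 E2 E4.
  by rewrite E1 E5 /= F3.
- exists r => //; split.
    move=> t ht; have [p [p' [E1 E2 E3 E4 E5]]] := Hstep t ht; exists p'.
    have x1 : (x : nat) = 1 by have := ltn_ord x; move: xn0; lia.
    rewrite x1 in E4; have [F1 F2 _ _ _] := stepB_inv k0 E2 E4.
    by split => //; rewrite F2 E3.
  have -> : cntb (rcons w x) = cntb w + ((x : nat) != 0) by rewrite /cntb -cats1 count_cat /= addn0.
  rewrite xn0.
  have key : Pot n k (rcons w x) + \sum_(t < k) ((t : nat).+1 == r) * 4 ^ t.+1 <=
             Pot n k w + \sum_(t < k) ((t : nat) == r) * 4 ^ t.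
    rewrite /Pot -!big_split /=; apply: leq_sum => t _.
    have [p [p' [E1 E2 E3 E4 E5]]] := Hstep t (ltn_ord t).
    have x1 : (x : nat) = 1 by have := ltn_ord x; move: xn0; lia.
    rewrite x1 in E4; have [F1 F2 F3 F4 F5] := stepB_inv k0 E2 E4.
    rewrite E1 E5 /= -(lvlf_0 hr (ltn_ord t)) -(lvlf_k hr (ltn_ord t)) -E3.
    case: (boolP (lvl k p == 0)) => [/eqP h0|/eqP h0].
      have [-> ->] := F3 h0; rewrite h0 (_ : (0 == k) = false); last by apply/negbTE; lia.
      by rewrite expnS /=; lia.
    case: (boolP (lvl k p == k)) => [/eqP hk|/eqP hk].
      have [_ ->] := F4 hk; rewrite /=; lia.
    by rewrite F5 //=; lia.
  have := ind_sum k r; lia.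
Qed.

Set Implicit Arguments.
Unset Strict Implicit.
Unset Printing Implicit Defensive.

Definition la : 'I_2 := @Ordinal 2 0 isT.
Definition lb : 'I_2 := @Ordinal 2 1 isT.

Ltac fin := first [ by [] | (congr Some; lia) | (exfalso; lia) ].

Lemma stB_mid n k l v : 0 < l -> l < k -> v < 4 -> 4 * k + 4 <= n ->
  stepn n k (4 * l + v) lb = Some (4 * l + v).
Proof. move=> *; rewrite /stepn /stepN /=; repeat (bcase; rewrite /=); fin. Qed.

Lemma stB_top n k v : 0 < k -> v < 3 -> 4 * k + 4 <= n ->
  stepn n k (4 * k + v) lb = Some (4 * k + v).+1.
Proof. move=> *; rewrite /stepn /stepN /=; repeat (bcase; rewrite /=); fin. Qed.

Lemma stB_top3 n k : 0 < k -> 4 * k + 5 <= n ->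
  stepn n k (4 * k + 3) lb = Some (4 * k + 4).
Proof. move=> *; rewrite /stepn /stepN /=; repeat (bcase; rewrite /=); fin. Qed.

Lemma stA_H n k : 4 * k + 6 <= n -> stepn n k (4 * k + 4) la = Some (4 * k + 5).
Proof. move=> *; rewrite /stepn /stepN /=; repeat (bcase; rewrite /=); fin. Qed.

Lemma stB_Z n k : 0 < k -> 4 * k + 6 <= n -> stepn n k (4 * k + 5) lb = Some 0.
Proof. move=> *; rewrite /stepn /stepN /=; repeat (bcase; rewrite /=); fin. Qed.

Lemma stA n k l v : l <= k -> v < 4 -> 4 * k + 4 <= n ->
  stepn n k (4 * l + v) la = Some (4 * (if l < k then l.+1 else 0) + v).
Proof. move=> *; rewrite /stepn /stepN /=; repeat (bcase; rewrite /=); fin. Qed.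

Lemma stAm n k m l v : l <= k -> v < 4 -> 4 * k + 4 <= n ->
  dwn n k (4 * l + v) (nseq m la) = Some (4 * ((l + m) %% k.+1) + v).
Proof.
move=> hl hv hn; elim: m l hl => [|m IH] l hl.
  by rewrite addn0 modn_small.
rewrite /= dwn_cons stA //.

case: ifP => hlk /=.
  by rewrite IH // addSnnS.
have -> : l = k by lia.
have := IH 0 (leq0n k); rewrite muln0 !add0n => ->.
by rewrite addnS -addSn modnDl.
Qed.

Lemma mod_ge x L : L <= x -> x < L + L -> x %% L = x - L.
Proof.
move=> h1 h2; rewrite -{1}(subnK h1) modnDr modn_small //; lia.
Qed.

Lemma sA n k l v p q : l <= k -> v < 4 -> 4 * k + 4 <= n -> p = 4 * l + v ->
  q = 4 * (if l < k then l.+1 else 0) + v -> stepn n k p la = Some q.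
Proof. by move=> ? ? ? -> ->; apply: stA. Qed.

Lemma sBmid n k l v p : 0 < l -> l < k -> v < 4 -> 4 * k + 4 <= n -> p = 4 * l + v ->
  stepn n k p lb = Some p.
Proof. by move=> ? ? ? ? ->; apply: stB_mid. Qed.

Lemma sBtop n k v p q : 0 < k -> v < 3 -> 4 * k + 4 <= n -> p = 4 * k + v -> q = p.+1 ->
  stepn n k p lb = Some q.
Proof. by move=> ? ? ? -> ->; apply: stB_top. Qed.

Lemma sBtop3 n k p q : 0 < k -> 4 * k + 5 <= n -> p = 4 * k + 3 -> q = 4 * k + 4 ->
  stepn n k p lb = Some q.
Proof. by move=> ? ? -> ->; apply: stB_top3. Qed.

Lemma sAH n k p q : 4 * k + 6 <= n -> p = 4 * k + 4 -> q = 4 * k + 5 -> stepn n k p la = Some q.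
Proof. by move=> ? -> ->; apply: stA_H. Qed.

Lemma sBZ n k p q : 0 < k -> 4 * k + 6 <= n -> p = 4 * k + 5 -> q = 0 -> stepn n k p lb = Some q.
Proof. by move=> ? ? -> ->; apply: stB_Z. Qed.

Lemma sAm_lt n k m l v p q : l + m <= k -> v < 4 -> 4 * k + 4 <= n -> p = 4 * l + v ->
  q = 4 * (l + m) + v -> dwn n k p (nseq m la) = Some q.
Proof.
move=> h1 h2 h3 -> ->; rewrite stAm //; last lia.
by rewrite modn_small.
Qed.

Lemma sAm_ge n k m l v p q : l <= k -> k < l + m -> l + m <= k + k.+1 -> v < 4 -> 4 * k + 4 <= n ->
  p = 4 * l + v -> q = 4 * (l + m - k.+1) + v -> dwn n k p (nseq m la) = Some q.
Proof.
move=> h1 h1' h2 h3 h4 -> ->; rewrite stAm //.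
by rewrite mod_ge //; lia.
Qed.

Fixpoint W (k i : nat) : seq 'I_2 :=
  match i with
  | 0 => nseq 4 lb
  | i'.+1 => (W k i' ++ [:: la; lb]) ++ nseq (k - i') la ++ (W k i' ++ [:: la; lb]) ++
             nseq (k - i') la ++ (W k i' ++ [:: la; lb]) ++ nseq (k - i') la ++ (W k i' ++ [:: la; lb])
  end.

Lemma dwn_seq n k p u v q : dwn n k p u = Some q -> dwn n k p (u ++ v) = dwn n k q v.
Proof. by move=> h; rewrite dwn_cat h. Qed.

Lemma dwn_step n k p (x : 'I_2) v q : stepn n k p x = Some q -> dwn n k p (x :: v) = dwn n k q v.
Proof. by move=> h; rewrite dwn_cons h. Qed.

Unset Implicit Arguments.

Ltac sg := try (repeat bcase; lia).

Section Step.
Variables (n k i : nat).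
Hypotheses (k0 : 0 < k) (hik : i.+1 < k) (hn : 4 * k + 6 <= n).
Hypothesis C1 : forall t, t < i -> dwn n k (4*(k-t)) (W k i) = Some (4*(i-t-1)).
Hypothesis C2 : dwn n k (4*(k-i)) (W k i) = Some (4*k+4).
Hypothesis C3 : forall t v, i < t -> t < k -> v < 4 -> dwn n k (4*(k-t)+v) (W k i) = Some (4*(k-t+i)+v).

Let u := W k i ++ [:: la; lb].

Lemma B1u t : t < i -> dwn n k (4*(k-t)) u = Some (4*(i-t)).
Proof.
move=> ht; rewrite /u (dwn_seq _ (C1 _ ht)).
rewrite dwn_cons (@sA n k (i-t-1) 0 _ (4*(i-t))); sg.
rewrite /= dwn_cons (@sBmid n k (i-t) 0 (4*(i-t))); sg.
by [].
Qed.

Lemma B1n t : t < i -> dwn n k (4*(i-t)) (nseq (k-i) la) = Some (4*(k-t)).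
Proof. move=> ht; apply: (@sAm_lt _ _ _ (i-t) 0); lia. Qed.

Lemma B2u : dwn n k (4*(k-i)) u = Some 0.
Proof.
rewrite /u (dwn_seq _ C2).
rewrite dwn_cons (@sAH n k _ (4*k+5)); sg.
rewrite /= dwn_cons (@sBZ n k _ 0); sg.
by [].
Qed.

Lemma B2n : dwn n k 0 (nseq (k-i) la) = Some (4*(k-i)).
Proof. apply: (@sAm_lt _ _ _ 0 0); lia. Qed.

Lemma B3u v : v < 3 -> dwn n k (4*(k-i.+1)+v) u = Some (4*k+v.+1).
Proof.
move=> hv; rewrite /u (dwn_seq _ (C3 _ _ (ltnSn i) hik (leq_trans hv (leqnSn 3)))).
rewrite dwn_cons (@sA n k (k-1) v _ (4*k+v)); sg.
rewrite /= dwn_cons (@sBtop n k v _ (4*k+v.+1)); sg.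
by [].
Qed.

Lemma B3u3 : dwn n k (4*(k-i.+1)+3) u = Some (4*k+4).
Proof.
rewrite /u (dwn_seq _ (C3 _ _ (ltnSn i) hik (ltnSn 3))).
rewrite dwn_cons (@sA n k (k-1) 3 _ (4*k+3)); sg.
rewrite /= dwn_cons (@sBtop3 n k _ (4*k+4)); sg.
by [].
Qed.

Lemma B3n v : v < 3 -> dwn n k (4*k+v.+1) (nseq (k-i) la) = Some (4*(k-i.+1)+v.+1).
Proof. move=> hv; apply: (@sAm_ge _ _ _ k v.+1); lia. Qed.

Lemma B4u t v : i.+1 < t -> t < k -> v < 4 -> dwn n k (4*(k-t)+v) u = Some (4*(k-t+i.+1)+v).
Proof.
move=> h1 h2 hv; rewrite /u (dwn_seq _ (C3 _ _ (ltnW h1) h2 hv)).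
rewrite dwn_cons (@sA n k (k-t+i) v _ (4*(k-t+i.+1)+v)); sg.
rewrite /= dwn_cons (@sBmid n k (k-t+i.+1) v _); sg.
by [].
Qed.

Lemma B4n t v : i.+1 < t -> t < k -> v < 4 -> dwn n k (4*(k-t+i.+1)+v) (nseq (k-i) la) = Some (4*(k-t)+v).
Proof. move=> h1 h2 hv; apply: (@sAm_ge _ _ _ (k-t+i.+1) v); lia. Qed.

Lemma Wstep :
  [/\ (forall t, t < i.+1 -> dwn n k (4*(k-t)) (W k i.+1) = Some (4*(i.+1-t-1))),
      dwn n k (4*(k-i.+1)) (W k i.+1) = Some (4*k+4) &
      (forall t v, i.+1 < t -> t < k -> v < 4 -> dwn n k (4*(k-t)+v) (W k i.+1) = Some (4*(k-t+i.+1)+v))].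
Proof.
have EW : W k i.+1 = u ++ nseq (k-i) la ++ u ++ nseq (k-i) la ++ u ++ nseq (k-i) la ++ u by [].
split.
- move=> t; rewrite ltnS leq_eqVlt => /orP [/eqP ->|ht]; rewrite EW.
    rewrite (dwn_seq _ B2u) (dwn_seq _ B2n) (dwn_seq _ B2u) (dwn_seq _ B2n) (dwn_seq _ B2u) (dwn_seq _ B2n) B2u.
    congr Some; lia.
  rewrite (dwn_seq _ (B1u _ ht)) (dwn_seq _ (B1n _ ht)) (dwn_seq _ (B1u _ ht)) (dwn_seq _ (B1n _ ht)) (dwn_seq _ (B1u _ ht)) (dwn_seq _ (B1n _ ht)) (B1u _ ht).
  congr Some; lia.
- rewrite EW -[4*(k-i.+1)]addn0.
  rewrite (dwn_seq _ (B3u 0 isT)) (dwn_seq _ (B3n 0 isT)).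
  rewrite (dwn_seq _ (B3u 1 isT)) (dwn_seq _ (B3n 1 isT)).
  rewrite (dwn_seq _ (B3u 2 isT)) (dwn_seq _ (B3n 2 isT)).
  exact: B3u3.
- move=> t v h1 h2 hv; rewrite EW.
  rewrite (dwn_seq _ (B4u _ _ h1 h2 hv)) (dwn_seq _ (B4n _ _ h1 h2 hv)).
  rewrite (dwn_seq _ (B4u _ _ h1 h2 hv)) (dwn_seq _ (B4n _ _ h1 h2 hv)).
  rewrite (dwn_seq _ (B4u _ _ h1 h2 hv)) (dwn_seq _ (B4n _ _ h1 h2 hv)).
  exact: B4u.
Qed.

End Step.
Lemma Wbase n k : 0 < k -> 4*k+5 <= n ->
  dwn n k (4*(k-0)) (W k 0) = Some (4*k+4) /\
  (forall t v, 0 < t -> t < k -> v < 4 -> dwn n k (4*(k-t)+v) (W k 0) = Some (4*(k-t+0)+v)).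
Proof.
move=> k0 hn; split.
  rewrite /= dwn_cons (@sBtop n k 0 (4*(k-0)) (4*k+1)); try lia.
  rewrite /= dwn_cons (@sBtop n k 1 (4*k+1) (4*k+2)); try lia.
  rewrite /= dwn_cons (@sBtop n k 2 (4*k+2) (4*k+3)); try lia.
  rewrite /= dwn_cons (@sBtop3 n k (4*k+3) (4*k+4)); try lia.
  by [].
move=> t v h1 h2 h3.
do 4 (rewrite /= dwn_cons (@sBmid n k (k-t) v (4*(k-t)+v)); try lia).
rewrite /=; congr Some; lia.
Qed.

Lemma Wclaims n k i : 0 < k -> i < k -> 4*k+5 <= n -> (0 < i -> 4*k+6 <= n) ->
  [/\ (forall t, t < i -> dwn n k (4*(k-t)) (W k i) = Some (4*(i-t-1))),
      dwn n k (4*(k-i)) (W k i) = Some (4*k+4) &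
      (forall t v, i < t -> t < k -> v < 4 -> dwn n k (4*(k-t)+v) (W k i) = Some (4*(k-t+i)+v))].
Proof.
move=> k0; elim: i => [|i IH] hi hn1 hn2.
  have [B1 B2] := Wbase n k k0 hn1; split => //.
have [C1 C2 C3] := IH (ltnW hi) hn1 (fun _ => hn2 isT).
exact: (@Wstep n k i k0 hi (hn2 isT) C1 C2 C3).
Qed.

Section Final.
Variables (n k : nat).

Definition Aut : pdfa n 2 :=
  [ffun px : 'I_n * 'I_2 => if stepN k px.1 px.2 is Some r then insub r else None].

Lemma dA_gen w (o : option 'I_n) :
  omap val (foldl (fun oq a => if oq is Some p then Aut (p, a) else None) o w) =
  foldl (fun o (x : 'I_2) => if o is Some q then stepn n k q x else None) (omap val o) w.
Proof.
elim: w o => [|x w IH] o //=.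
rewrite IH; congr (foldl _ _ w).
case: o => [p|] //=.
rewrite ffunE /stepn /=; case: (stepN k p x) => [r|] //=.
by case: insubP => [u -> <-|/negbTE ->].
Qed.

Lemma dA w (q : 'I_n) : omap val (delta_word Aut q w) = dwn n k q w.
Proof. exact: (dA_gen w (Some q)). Qed.
End Final.


Lemma PotQ n k : 0 < k -> 4 * k + 5 <= n -> (1 < k -> 4 * k + 6 <= n) ->
  Pot n k (W k k.-1) = 4 ^ k.
Proof.
move=> k0 hn1 hn2.
have [C1 C2 _] := Wclaims n k (k.-1) k0 (ltac:(lia) : k.-1 < k) hn1 (fun h => hn2 ltac:(lia)).
case: k k0 hn1 hn2 C1 C2 => [//|k'] _ hn1 hn2 C1 C2.
rewrite /Pot big_ord_recr /= big1.
  rewrite /tok (_ : k' = k'.+1.-1) // C2 /vo /vl /=.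
  have -> : (4 * k'.+1 + 4 < 4 * k'.+2) = false by apply/negbTE; lia.
  by rewrite add0n expnS.
move=> t _; rewrite /tok C1 //= /vl.
have -> : (4 * (k' - t - 1) < 4 * k'.+2) = true by apply/idP; lia.
by rewrite (_ : (4 * (k' - t - 1)) %% 4 = 0) //; lia.
Qed.

Lemma lower n k w : 0 < k -> 4 * k + 5 <= n -> (1 < k -> 4 * k + 6 <= n) ->
  expr (Aut n k) w = expr (Aut n k) (W k k.-1) -> 4 ^ k <= size w.
Proof.
move=> k0 hn1 hn2 E.
have [C1 C2 _] := Wclaims n k (k.-1) k0 (ltac:(lia) : k.-1 < k) hn1 (fun h => hn2 ltac:(lia)).
have Et : forall t, t < k -> dwn n k (tok k t) w = dwn n k (tok k t) (W k k.-1).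
  move=> t ht; have qt : tok k t < n by rewrite /tok; lia.
  have := congr1 (fun f : ptrans n => f (Ordinal qt)) E; rewrite /= !ffunE => E'.
  by rewrite -!(dA n k _ (Ordinal qt)) E'.
have alive : forall t, t < k -> dwn n k (tok k t) w <> None.
  move=> t ht; rewrite Et //.
  case: (ltnP t k.-1) => h.
    by rewrite /tok C1.
  have -> : t = k.-1 by lia.
  by rewrite /tok C2.
have [r _ [_ HP]] := inv_main k0 alive.
have -> : 4 ^ k = Pot n k w.
  rewrite -(@PotQ n k k0 hn1 hn2) /Pot; apply: eq_bigr => t _; by rewrite Et.
apply: (leq_trans HP); exact: count_size.
Qed.

Theorem corollary1 (n k : nat) :
  0 < k -> n = 5 * k + 4 -> 4 ^ k <= max_diam n 2.
Proof.
move=> k0 ->.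
set N := 5 * k + 4.
have hn1 : 4 * k + 5 <= N by rewrite /N; lia.
have hn2 : 1 < k -> 4 * k + 6 <= N by rewrite /N; lia.
set A := Aut N k; set Q := W k k.-1; set f := expr A Q.
have ex : expressed A f by exists Q.
have dep : 4 ^ k <= depth A f.
  rewrite /depth; destruct (pselect _) as [h|nh].
    case: (ex_minnP h) => l; rewrite /expressed_len => /existsP [tu /eqP htu] _.
    rewrite -(size_tuple tu); exact: (@lower N k tu k0 hn1 hn2 htu).
  exfalso; apply: nh; exists (size Q); rewrite /expressed_len; apply/existsP; exists (in_tuple Q); by [].
apply: (leq_trans dep); apply: (leq_trans _ (leq_bigmax A)).
rewrite /diameter; apply: (leq_bigmax_cond (F := depth A)).
exact: asboolT.
Qed.
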